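(* (1) Let $a\in B(H)$. If $a^2=a$ and $\|a\|\le1$, then $a^*=a$, i.e., $a$ is an orthogonal projection. (2) Let $p\in B(H)$ be an orthogonal projection and let $b,c\in B(H)$ satisfy $c^*b=p$ and $\|b+c\|\le2$. Then $\ker p\subset\ker b\cap\ker c$ if and only if $b=c$. In this case, $\ker p=\ker b=\ker c$.
   Context: $H$ is a Hilbert space and $B(H)$ the bounded operators on $H$. *)

(* Defs.v *)
From HB Require Import structures.
From mathcomp Require Import all_boot all_order all_algebra.
From mathcomp Require Import boolp classical_sets reals.
From mathcomp.real_closed Require Import complex.
Set Implicit Arguments. Unset Strict Implicit. Unset Printing Implicit Defensive.
Import Order.TTheory GRing.Theory Num.Theory.
Local Open Scope ring_scope.
Local Open Scope classical_set_scope.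

Definition inner_product (R : realType) (V : lmodType R[i])
    (ip : V -> V -> R[i]) : Prop :=
  [/\ (forall x y z : V, ip (x + y) z = ip x z + ip y z),
      (forall (k : R[i]) (x y : V), ip (k *: x) y = k * ip x y),
      (forall x y : V, ip y x = (ip x y)^*),
      (forall x : V, 0 <= ip x x) &
      (forall x : V, ip x x = 0 -> x = 0)].

Definition hnorm (R : realType) (V : lmodType R[i]) (ip : V -> V -> R[i])
    (x : V) : R :=
  Num.sqrt (complex.Re (ip x x)).

Definition hcomplete (R : realType) (V : lmodType R[i])
    (ip : V -> V -> R[i]) : Prop :=
  forall u : nat -> V,
    (forall e : R, 0 < e -> exists N : nat, forall m n : nat,
        (N <= m)%N -> (N <= n)%N -> hnorm ip (u m - u n) < e) ->
    exists l : V, forall e : R, 0 < e -> exists N : nat, forall n : nat,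
        (N <= n)%N -> hnorm ip (u n - l) < e.

Definition hilbert (R : realType) (V : lmodType R[i])
    (ip : V -> V -> R[i]) : Prop :=
  inner_product ip /\ hcomplete ip.

Definition bounded_op (R : realType) (V : lmodType R[i])
    (ip : V -> V -> R[i]) (a : V -> V) : Prop :=
  [/\ (forall x y : V, a (x + y) = a x + a y),
      (forall (k : R[i]) (x : V), a (k *: x) = k *: a x) &
      exists M : R, forall x : V, hnorm ip (a x) <= M * hnorm ip x].

Definition opnorm (R : realType) (V : lmodType R[i])
    (ip : V -> V -> R[i]) (a : V -> V) : R :=
  sup [set hnorm ip (a x) | x in [set x : V | hnorm ip x <= 1]].

Definition is_adjoint (R : realType) (V : lmodType R[i])
    (ip : V -> V -> R[i]) (a a' : V -> V) : Prop :=
  forall x y : V, ip (a x) y = ip x (a' y).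

Definition selfadjoint (R : realType) (V : lmodType R[i])
    (ip : V -> V -> R[i]) (a : V -> V) : Prop :=
  is_adjoint ip a a.

Definition orth_proj (R : realType) (V : lmodType R[i])
    (ip : V -> V -> R[i]) (p : V -> V) : Prop :=
  [/\ bounded_op ip p, p \o p = p & selfadjoint ip p].

Definition kernel (R : realType) (V : lmodType R[i]) (a : V -> V) : set V :=
  [set x | a x = 0].

(* Main.v *)
Require Import Defs.
From HB Require Import structures.
From mathcomp Require Import all_boot all_order all_algebra.
From mathcomp Require Import boolp classical_sets reals.
From mathcomp.real_closed Require Import complex.
From mathcomp Require Import ring lra.
Import Order.TTheory GRing.Theory Num.Theory.
Local Open Scope complex_scope.
Local Open Scope ring_scope.
Local Open Scope classical_set_scope.

Section S.
Variable (R : realType) (V : lmodType R[i]) (ip : V -> V -> R[i]).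
Hypothesis ipD : forall x y z, ip (x + y) z = ip x z + ip y z.
Hypothesis ipZ : forall k x y, ip (k *: x) y = k * ip x y.
Hypothesis ipC : forall x y, ip y x = (ip x y)^*.
Hypothesis ipge0 : forall x, 0 <= ip x x.
Hypothesis ipE : forall x, ip x x = 0 -> x = 0.

Lemma ge0_RE (z : R[i]) : 0 <= z -> z = (complex.Re z)%:C.
Proof. case: z => a b h; have := ger0_Im h; rewrite /= => ->; by []. Qed.

Lemma realC (k : R) : (k%:C)^* = k%:C.
Proof. apply: conj_Creal; apply/complex_realP; by exists k. Qed.

Lemma ip0l x : ip 0 x = 0.
Proof. by have := ipZ 0 0 x; rewrite scale0r mul0r. Qed.
Lemma ip0r x : ip x 0 = 0.
Proof. by rewrite ipC ip0l conjC0. Qed.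
Lemma ipDr x y z : ip x (y + z) = ip x y + ip x z.
Proof. by rewrite ipC ipD rmorphD /= -!ipC. Qed.
Lemma ipNl x y : ip (- x) y = - ip x y.
Proof. by rewrite -scaleN1r ipZ mulN1r. Qed.
Lemma ipNr x y : ip x (- y) = - ip x y.
Proof. by rewrite ipC ipNl rmorphN /= -ipC. Qed.
Lemma ipZr k x y : ip x (k *: y) = k^* * ip x y.
Proof. by rewrite ipC ipZ rmorphM /= -ipC. Qed.

Definition N x := complex.Re (ip x x).
Lemma ipxx x : ip x x = (N x)%:C.
Proof. exact: ge0_RE. Qed.
Lemma N_ge0 x : 0 <= N x.
Proof. by have := ipge0 x; rewrite ipxx ler0c. Qed.
Lemma hnormE x : hnorm ip x = Num.sqrt (N x).
Proof. by []. Qed.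
Lemma N0_eq x : N x = 0 -> x = 0.
Proof. by move=> h; apply: ipE; rewrite ipxx h. Qed.
Lemma N0 : N 0 = 0.
Proof. by rewrite /N ip0l. Qed.

Lemma NZ (k : R) v : N (k%:C *: v) = k ^+ 2 * N v.
Proof.
apply: complexI; rewrite -ipxx ipZ ipZr realC ipxx.
by rewrite rmorphM rmorphXn /=; ring.
Qed.

Lemma ipDD u v : ip (u + v) (u + v) = ip u u + ip v v + (ip u v + (ip u v)^*).
Proof. rewrite ipD !ipDr (ipC u v); ring. Qed.
Lemma ipBB u v : ip (u - v) (u - v) = ip u u + ip v v - (ip u v + (ip u v)^*).
Proof. rewrite ipD !ipDr !ipNl !ipNr opprK (ipC u v); ring. Qed.

Lemma paral u v : N (u + v) <= 2 * N u + 2 * N v.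
Proof.
have h : (N (u + v) + N (u - v))%:C = (2 * N u + 2 * N v)%:C.
  rewrite !rmorphD !rmorphM /= -!ipxx ipDD ipBB.
  have -> : (2 : R)%:C = 2 by rewrite rmorph_nat.
  ring.
have := complexI h; have := N_ge0 (u - v); lra.
Qed.


Lemma bound_lemma (f : V -> V) (K : R) :
  (forall k x, f (k *: x) = k *: f x) ->
  (exists M, forall x, hnorm ip x <= 1 -> hnorm ip (f x) <= M) ->
  opnorm ip f <= K -> forall x, N (f x) <= K ^+ 2 * N x.
Proof.
move=> fZ [M hM]; rewrite /opnorm => hK x.
set S := [set hnorm ip (f x) | x in _] in hK.
have hub : has_ubound S by exists M => y [z hz <-]; exact: hM.
have hS z : hnorm ip z <= 1 -> hnorm ip (f z) <= K.
  move=> hz; apply: le_trans hK; apply: (ub_le_sup hub); by exists z.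
have f0 : f 0 = 0 by have := fZ 0 0; rewrite !scale0r.
case: (eqVneq (N x) 0) => [Nx0 | Nx0].
  have -> : x = 0 by apply: N0_eq.
  by rewrite f0 N0 mulr0.
set r := Num.sqrt (N x).
have r0 : 0 < r by rewrite sqrtr_gt0 lt_neqAle eq_sym Nx0 N_ge0.
have rr : r ^+ 2 = N x by rewrite sqr_sqrtr // N_ge0.
have := hS ((r^-1)%:C *: x); rewrite !hnormE fZ !NZ.
have -> : r^-1 ^+ 2 * N x = 1 by rewrite -rr exprVn mulVf // expf_neq0 // gt_eqF.
rewrite sqrtr1 lexx => /(_ isT).
set u := r^-1 ^+ 2 * N (f x) => hu.
have u0 : 0 <= u by rewrite /u mulr_ge0 ?N_ge0 // exprn_ge0 // invr_ge0 ltW.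
have hsq := sqr_sqrtr u0.
have s0 := sqrtr_ge0 u.
have uK : u <= K ^+ 2 by nra.
have -> : N (f x) = r ^+ 2 * u by rewrite /u mulrA -exprMn mulfV ?gt_eqF // expr1n mul1r.
rewrite -rr; have : 0 <= r ^+ 2 by rewrite exprn_ge0 // ltW.
nra.
Qed.

Lemma ortho (a : V -> V) :
  (forall z, N (a z) <= N z) ->
  (forall x y, a (x + y) = a x + a y) ->
  (forall k x, a (k *: x) = k *: a x) ->
  forall x y, a x = x -> a y = 0 -> ip x y = 0.
Proof.
move=> aN aD aZ x y ax ay.
set w := ip x y.
have [q wq] : exists q, w * w^* = q%:C by exists (complex.Re (w * w^*)); apply: ge0_RE; apply: mul_conjC_ge0.
have q0 : 0 <= q by rewrite -ler0c -wq mul_conjC_ge0.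
set s := (1 + N y)^-1.
have Ny := N_ge0 y.
have s0 : 0 < s by rewrite /s invr_gt0; lra.
have sE : s * (1 + N y) = 1 by rewrite /s mulVf //; apply/eqP; lra.
set t := - (s%:C * w).
have hz : N (x + t *: y) = N x - (s * q + s * q) + s * s * q * N y.
  apply: complexI; rewrite -ipxx ipD !ipDr !ipZ !ipZr (ipC x y) -/w /t.
  rewrite !rmorphN !rmorphM /= realC !ipxx.
  rewrite !rmorphD /= !rmorphN /= !rmorphD /= !rmorphM /= -wq.
  ring.
have := aN (x + t *: y); rewrite aD aZ ax ay scaler0 addr0 hz => hle.
have : q * (s * (1 + s)) <= 0 by nra.
move=> hq.
have q00 : q = 0.
  apply/eqP; rewrite eq_le q0 andbT.
  have ss : 0 < s * (1 + s) by nra.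
  nra.
by apply/eqP; rewrite -mul_conjC_eq0 wq q00.
Qed.


Lemma sqN (M : R) x y : hnorm ip x <= 1 -> hnorm ip y <= M * hnorm ip x -> N y <= M ^+ 2.
Proof.
rewrite !hnormE => h1 h2.
have := sqr_sqrtr (N_ge0 x); have := sqr_sqrtr (N_ge0 y).
have := sqrtr_ge0 (N x); have := sqrtr_ge0 (N y).
move: h1 h2; set sx := Num.sqrt (N x); set sy := Num.sqrt (N y) => h1 h2 hy hx ey ex.
have h3 : 0 <= M * sx + sy by lra.
have h4 : sy * sy <= (M * sx) * (M * sx).
  have h0 : 0 <= M * sx - sy by lra.
  have := mulr_ge0 h0 h3; nra.
have h5 : sx * sx <= 1 by nra.
have h6 : 0 <= M * M by nra.
rewrite -ey expr2; nra.
Qed.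

Lemma main_core :
  (forall a : V -> V,
      bounded_op ip a -> a \o a = a -> opnorm ip a <= 1 -> selfadjoint ip a) /\
  (forall p b c c' : V -> V,
      orth_proj ip p -> bounded_op ip b -> bounded_op ip c ->
      is_adjoint ip c c' -> c' \o b = p ->
      opnorm ip (fun x => b x + c x) <= 2 ->
      ((kernel p `<=` kernel b `&` kernel c) <-> b = c) /\
      (b = c -> kernel p = kernel b /\ kernel p = kernel c)).
Proof.
split.
  move=> a [aD aZ [M hM]] aa ha.
  have aax x : a (a x) = a x by have := congr1 (fun f => f x) aa.
  have aN z : N (a z) <= N z.
    have := bound_lemma a 1 aZ _ ha z; rewrite expr1n mul1r; apply.
    exists `|M| => x hx; apply: le_trans (hM x) _.
    have := ler_norm M; have := normr_ge0 M; have := sqrtr_ge0 (N x).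
    rewrite hnormE in hx *; nra.
  have aN1 u : a (- u) = - a u by rewrite -scaleN1r aZ scaleN1r.
  have ort := ortho a aN aD aZ.
  move=> x y.
  have e1 : ip (a x) (a y - y) = 0.
    by apply: ort; rewrite ?aax // aD aN1 aax subrr.
  have e2 : ip (a y) (a x - x) = 0.
    by apply: ort; rewrite ?aax // aD aN1 aax subrr.
  have -> : ip (a x) y = ip (a x) (a y) by move: e1; rewrite ipDr ipNr => /eqP; rewrite subr_eq0 => /eqP ->.
  have : ip (a x - x) (a y) = 0 by rewrite ipC e2 conjC0.
  by rewrite ipD ipNl => /eqP; rewrite subr_eq0 => /eqP ->.
move=> p b c c' [[pD pZ _] pp psa] [bD bZ [Mb hMb]] [cD cZ [Mc hMc]] cadj cb hbc.
have ppx x : p (p x) = p x by have := congr1 (fun f => f x) pp.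
have cbx x : c' (b x) = p x by have := congr1 (fun f => f x) cb.
have pN u : p (- u) = - p u by rewrite -scaleN1r pZ scaleN1r.
have kb x y : ip (b x) (c y) = ip (p x) y.
  by rewrite ipC cadj cbx -ipC.
have bcN x : N (b x + c x) <= 2 ^+ 2 * N x.
  apply: (bound_lemma (fun x => b x + c x)) hbc x.
    by move=> k u; rewrite bZ cZ scalerDr.
  exists (Num.sqrt (2 * Mb ^+ 2 + 2 * Mc ^+ 2)) => u hu.
  rewrite hnormE; apply: ler_wsqrtr.
  have := sqN Mb u (b u) hu (hMb u); have := sqN Mc u (c u) hu (hMc u); have := paral (b u) (c u); lra.
have diffN x : N (b x - c x) <= 4 * N x - 4 * N (p x).
  have h : (N (b x - c x))%:C = (N (b x + c x) - N (p x) *+ 4)%:C.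
    have w : ip (p x) x = (N (p x))%:C by rewrite -{1}ppx psa ipxx.
    rewrite rmorphB /= rmorphMn /= -!ipxx ipBB ipDD kb w realC.
    rewrite (ipxx (p x)); ring.
  have := complexI h; have := bcN x; lra.
have hb0 z : b (p z) = c (p z).
  have := diffN (p z); rewrite ppx subrr => h.
  have : N (b (p z) - c (p z)) = 0 by apply/eqP; rewrite eq_le h N_ge0.
  by move/N0_eq/eqP; rewrite subr_eq0 => /eqP.
have kerb : b = c -> kernel p `<=` kernel b `&` kernel c.
  move=> ebc; subst c => x; rewrite /kernel /= => px.
  suff : b x = 0 by move=> ->.
  by apply: ipE; rewrite kb px ip0l.
split; first split.
- move=> hker; apply: funext => z.
  have hk : p (z - p z) = 0 by rewrite pD pN ppx subrr.
  have [hb hc] := hker _ hk.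
  have ez : z = (z - p z) + p z by rewrite subrK.
  rewrite ez bD cD.
  rewrite /kernel /= in hb hc.
  by rewrite hb hc !add0r hb0.
- exact: kerb.
move=> ebc; have hk := kerb ebc; subst c.
have c'0 : c' 0 = 0.
  apply: ipE; by rewrite -cadj ip0r.
suff e : kernel p = kernel b by [].
apply/seteqP; split => x.
  by move=> /hk [].
rewrite /kernel /= => bx.
by rewrite -cbx bx c'0.
Qed.

End S.

Theorem lemma4p1 (R : realType) (V : lmodType R[i]) (ip : V -> V -> R[i]) :
  hilbert ip ->
  (forall a : V -> V,
      bounded_op ip a -> a \o a = a -> opnorm ip a <= 1 -> selfadjoint ip a) /\
  (forall p b c c' : V -> V,
      orth_proj ip p -> bounded_op ip b -> bounded_op ip c ->
      is_adjoint ip c c' -> c' \o b = p ->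
      opnorm ip (fun x => b x + c x) <= 2 ->
      ((kernel p `<=` kernel b `&` kernel c) <-> b = c) /\
      (b = c -> kernel p = kernel b /\ kernel p = kernel c)).
Proof.
case=> [[ipD ipZ ipC ipge0 ipE] _].
by apply: main_core.
Qed.
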